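(* Let $\mathbf{X}$ be a finitely supported real random variable with $\mathbf{E}[\mathbf{X}]=0$ and $\mathrm{Var}[\mathbf{X}]=1$ that takes at most $\ell$ distinct values, and let $d\ge 1$ and $s\ge 1$ be natural numbers. Then there do not exist (for any $n$) two multilinear polynomials $p,q$ of degree at most $d$ over $\mathbb{R}^n$ with $\mathrm{sparsity}(p)=s$ and $\mathrm{sparsity}(q)>\Phi(d,s,\ell)$ such that $p(\mathbf{X}^{\otimes n})$ and $q(\mathbf{X}^{\otimes n})$ are identically distributed. Consequently $\mathrm{Max\text{-}Sparsity\text{-}Gap}_{\mathbf{X},d}(s)$ is well defined and \[ \mathrm{Max\text{-}Sparsity\text{-}Gap}_{\mathbf{X},d}(s)\le \Phi(d,s,\ell):=2^{2d^2\cdot(\ell^{ds}+3)}. \]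
   Context: A multilinear polynomial of degree at most $d$ over $\mathbb{R}^n$ is $p(x)=\sum_{S\subseteq[n],|S|\le d}\widehat{p}(S)\prod_{i\in S}x_i$; $\mathrm{sparsity}(p)$ is the number of nonzero coefficients. $\mathrm{Max\text{-}Sparsity\text{-}Gap}_{\mathbf{X},d}(s)$ is the largest natural number $t$ such that there exist (for some $n$) multilinear polynomials $p,q$ of degree at most $d$ with $\mathrm{sparsity}(p)=s$, $\mathrm{sparsity}(q)=t$, and $p(\mathbf{X}^{\otimes n})$, $q(\mathbf{X}^{\otimes n})$ identically distributed (where $\mathbf{X}^{\otimes n}$ is a vector of $n$ i.i.d. copies of $\mathbf{X}$), while no such pair exists with $\mathrm{sparsity}(q)>t$. *)

(* Defs.v *)
From HB Require Import structures.
From mathcomp Require Import all_boot all_order all_algebra.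
From mathcomp Require Import reals.
Set Implicit Arguments. Unset Strict Implicit. Unset Printing Implicit Defensive.
Import Order.TTheory GRing.Theory Num.Theory.
Local Open Scope ring_scope.

(* A finitely supported real random variable X is given by its k atoms
   [v i] (pairwise distinct values) with probabilities [w i] > 0 summing to 1. *)
Definition finite_rv (R : realType) (k : nat) (v : 'I_k -> R) (w : 'I_k -> R) :=
  injective v /\ (forall i, 0 < w i) /\ \sum_(i < k) w i = 1.

Definition rv_mean (R : realType) (k : nat) (v w : 'I_k -> R) : R :=
  \sum_(i < k) w i * v i.

Definition rv_var (R : realType) (k : nat) (v w : 'I_k -> R) : R :=
  \sum_(i < k) w i * (v i - rv_mean v w) ^+ 2.

(* Multilinear polynomials over R^n: coefficient \hat p(S) for each S ⊆ [n]. *)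
Definition mlpoly (R : realType) (n : nat) := {ffun {set 'I_n} -> R}.

Definition ml_deg_le (R : realType) (n : nat) (p : mlpoly R n) (d : nat) :=
  forall S : {set 'I_n}, p S != 0 -> (#|S| <= d)%N.

Definition sparsity (R : realType) (n : nat) (p : mlpoly R n) : nat :=
  #|[set S : {set 'I_n} | p S != 0]|.

Definition ml_eval (R : realType) (n : nat) (p : mlpoly R n) (x : 'I_n -> R) : R :=
  \sum_(S : {set 'I_n}) p S * \prod_(i in S) x i.

(* P[ p(X^{⊗n}) = t ]: sum over outcomes a (atom index of each coordinate)
   of the product probability. *)
Definition law_at (R : realType) (k n : nat) (v w : 'I_k -> R)
    (p : mlpoly R n) (t : R) : R :=
  \sum_(a : {ffun 'I_n -> 'I_k} | ml_eval p (fun i => v (a i)) == t)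
     \prod_(i < n) w (a i).

(* p(X^{⊗n}) and q(X^{⊗n}) are identically distributed (both are finitely
   supported, so equal laws = equal probability mass at every real t). *)
Definition ident_distr (R : realType) (k n : nat) (v w : 'I_k -> R)
    (p q : mlpoly R n) :=
  forall t : R, law_at v w p t = law_at v w q t.

(* t is an admissible value in the definition of Max-Sparsity-Gap_{X,d}(s). *)
Definition gap_achievable (R : realType) (k : nat) (v w : 'I_k -> R)
    (d s t : nat) :=
  exists (n : nat) (p q : mlpoly R n),
    [/\ ml_deg_le p d, ml_deg_le q d, sparsity p = s, sparsity q = t
      & ident_distr v w p q].

Definition Phi (d s l : nat) : nat := (2 ^ (2 * d ^ 2 * (l ^ (d * s) + 3)))%N.

(* Main.v *)
Require Import Defs.
From HB Require Import structures.
From mathcomp Require Import all_boot all_order all_algebra.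
From mathcomp Require Import reals.
From mathcomp Require Import ring lra zify.
From Stdlib Require Import Classical.
Import Order.TTheory GRing.Theory Num.Theory.
Local Open Scope ring_scope.

Module CubeA.
Set Implicit Arguments. Unset Strict Implicit. Unset Printing Implicit Defensive.
Import Order.TTheory GRing.Theory Num.Theory.
Local Open Scope ring_scope.

Section Cube.
Variable R : realType.
Variable n : nat.
Implicit Types (S T U A B z : {set 'I_n}).

Definition chi S A : R := \prod_i (if (i \in S) && (i \in A) then -1 else 1).

Lemma chiC S A : chi S A = chi A S.
Proof. by apply: eq_bigr => i _; rewrite andbC. Qed.

Lemma chi_sq S A : chi S A * chi S A = 1.
Proof.
rewrite -big_split /=; apply: big1 => i _.
by case: ifP; rewrite ?mulrNN mulr1.
Qed.

Lemma cube_sum (f g : 'I_n -> R) :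
  \sum_(U : {set 'I_n}) \prod_i (if i \in U then f i else g i) = \prod_i (f i + g i).
Proof. by rewrite bigA_distr. Qed.

Lemma chi_ortho S T :
  \sum_A chi S A * chi T A = if S == T then (2 ^ n)%:R else 0.
Proof.
transitivity (\sum_(A : {set 'I_n}) \prod_i (if i \in A then
   ((if i \in S then -1 else 1) * (if i \in T then -1 else 1)) else (1:R))).
  apply: eq_bigr => A _; rewrite -big_split /=; apply: eq_bigr => i _.
  by case: (i \in A); rewrite ?andbT ?andbF ?mulr1.
rewrite cube_sum; case: eqP => [<-|/eqP neST].
  rewrite (eq_bigr (fun _ => 2)); last first.
    by move=> i _; case: (i \in S); rewrite ?mulrNN mulr1.
  by rewrite prodr_const card_ord natrX.
have [i Hi]: exists i, (i \in S) != (i \in T).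
  apply/existsP; apply: contraR neST; rewrite negb_exists => /forallP H.
  by apply/eqP/setP => i; have := H i; rewrite negbK => /eqP.
rewrite (bigD1 i) //=; move: Hi.
by case: (i \in S); case: (i \in T) => //= _; rewrite ?mulr1 ?mul1r addNr mul0r.
Qed.

End Cube.

End CubeA.
Import CubeA.

Module CubeB.
Set Implicit Arguments. Unset Strict Implicit. Unset Printing Implicit Defensive.
Import Order.TTheory GRing.Theory Num.Theory.
Local Open Scope ring_scope.

Section Fourier.
Variable R : realType.
Variable n : nat.
Implicit Types (S T U A B z : {set 'I_n}) (F G : {set 'I_n} -> R).
Local Notation chi := (@chi R n).

Definition N2 : R := (2 ^ n)%:R.
Lemma N2_neq0 : N2 != 0.
Proof. by rewrite /N2 pnatr_eq0 expn_eq0. Qed.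
Lemma N2_gt0 : 0 < N2.
Proof. by rewrite /N2 ltr0n expn_gt0. Qed.

Definition fc F T : R := N2^-1 * \sum_A F A * chi T A.

Lemma fc_lin (e : {set 'I_n} -> R) T :
  fc (fun A => \sum_S e S * chi S A) T = e T.
Proof.
rewrite /fc.
under eq_bigr => A _ do rewrite mulr_suml.
rewrite exchange_big /=.
under eq_bigr => S _.
  rewrite (eq_bigr (fun A => e S * (chi S A * chi T A))); last by move=> A _; rewrite mulrA.
  rewrite -mulr_sumr chi_ortho.
  over.
rewrite (bigD1 T) //= eqxx big1 ?addr0; last first.
  by move=> S /negPf ->; rewrite mulr0.
by rewrite -/N2 mulrCA mulVf ?N2_neq0 ?mulr1.
Qed.

Lemma fc_inv F A : F A = \sum_T fc F T * chi T A.
Proof.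
rewrite /fc.
under eq_bigr => T _ do rewrite -mulrA mulr_suml.
rewrite -mulr_sumr exchange_big /=.
under eq_bigr => B _.
  rewrite (eq_bigr (fun T => F B * (chi B T * chi A T))); last by move=> T _; rewrite (@chiC R n T B) (@chiC R n T A) mulrA.
  rewrite -mulr_sumr chi_ortho.
  over.
rewrite (bigD1 A) //= eqxx big1 ?addr0; last first.
  by move=> S /negPf; rewrite eq_sym => ->; rewrite mulr0.
by rewrite -/N2 mulrCA mulVf ?N2_neq0 ?mulr1.
Qed.

Lemma parseval F : \sum_A F A ^+ 2 = N2 * \sum_S fc F S ^+ 2.
Proof.
transitivity (\sum_A F A * \sum_S fc F S * chi S A).
  by apply: eq_bigr => A _; rewrite -fc_inv expr2.
under eq_bigr => A _ do rewrite mulr_sumr.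
rewrite exchange_big mulr_sumr; apply: eq_bigr => S _.
rewrite expr2 {2}/fc; set X := (\sum_A F A * chi S A).
have -> : N2 * (N2^-1 * X * fc F S) = X * fc F S by field; apply: N2_neq0.
rewrite /X mulr_suml.
by apply: eq_bigr => A _; ring.
Qed.

Lemma fc_ext F G : (forall A, F A = G A) -> fc F =1 fc G.
Proof. by move=> H T; rewrite /fc; apply: congr2 => //; apply: eq_bigr => A _; rewrite H. Qed.

End Fourier.

End CubeB.
Import CubeB.

Module CubeC.
Set Implicit Arguments. Unset Strict Implicit. Unset Printing Implicit Defensive.
Import Order.TTheory GRing.Theory Num.Theory.
Local Open Scope ring_scope.

Section Deg.
Variable R : realType.
Variable n : nat.
Implicit Types (S T U A B z : {set 'I_n}) (F G : {set 'I_n} -> R).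
Local Notation chi := (@chi R n).
Local Notation fc := (@fc R n).

Definition hasdeg F D := forall T, (D < #|T|)%N -> fc F T = 0.

Lemma hasdeg_ext F G D : (forall A, F A = G A) -> hasdeg F D -> hasdeg G D.
Proof. by move=> H HF T HT; rewrite -(fc_ext H) HF. Qed.

Lemma hasdeg_mono F D D' : (D <= D')%N -> hasdeg F D -> hasdeg F D'.
Proof. by move=> le HF T HT; apply: HF; apply: leq_ltn_trans HT. Qed.

Lemma chi0 A : chi set0 A = 1.
Proof. by apply: big1 => i _; rewrite in_set0. Qed.

Lemma fc_lin2 a b F G T :
  fc (fun A => a * F A + b * G A) T = a * fc F T + b * fc G T.
Proof.
rewrite /CubeB.fc mulrCA (mulrCA b) -mulrDr; congr (_ * _).
rewrite !mulr_sumr -big_split /=; apply: eq_bigr => A _; ring.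
Qed.

Lemma fc_const c T : fc (fun _ => c) T = if T == set0 then c else 0.
Proof.
rewrite -(fc_lin (fun S => if S == set0 then c else 0)); apply: fc_ext => A.
rewrite (bigD1 set0) //= eqxx chi0 mulr1 big1 ?addr0 //.
by move=> S /negPf ->; rewrite mul0r.
Qed.

Lemma hasdeg_const c D : hasdeg (fun _ => c) D.
Proof.
move=> T HT; rewrite fc_const; case: eqP => // T0.
by move: HT; rewrite T0 cards0.
Qed.

Lemma hasdeg_affine a b F D : hasdeg F D -> hasdeg (fun A => a * F A + b) D.
Proof.
move=> HF T HT.
have := fc_lin2 a b F (fun _ => 1) T; rewrite (fc_ext (G := fun A => a * F A + b)); last first.
  by move=> A; rewrite mulr1.
move=> ->; rewrite HF // (hasdeg_const 1 HT); ring.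
Qed.

Definition symd S T := (S :\: T) :|: (T :\: S).

Lemma chi_mul S T A : chi S A * chi T A = chi (symd S T) A.
Proof.
rewrite -big_split /=; apply: eq_bigr => i _.
rewrite /symd !inE.
by case: (i \in S); case: (i \in T); case: (i \in A); rewrite /= ?mulrNN ?mulr1 ?mul1r.
Qed.

Lemma card_symd S T : (#|symd S T| <= #|S| + #|T|)%N.
Proof.
apply: leq_trans (leq_card_setU _ _) _.
by apply: leq_add; apply: subset_leq_card; apply: subsetDl.
Qed.

Lemma hasdeg_mul F G D1 D2 :
  hasdeg F D1 -> hasdeg G D2 -> hasdeg (fun A => F A * G A) (D1 + D2).
Proof.
move=> HF HG U HU.
rewrite /CubeB.fc.
transitivity ((@N2 R n)^-1 * \sum_S \sum_T fc F S * fc G T *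
               \sum_A chi S A * chi T A * chi U A).
  congr (_ * _).
  transitivity (\sum_A \sum_S \sum_T fc F S * fc G T * (chi S A * chi T A * chi U A)).
    apply: eq_bigr => A _.
    rewrite {1}(fc_inv F A) {1}(fc_inv G A) mulr_suml mulr_suml; apply: eq_bigr => S _.
    rewrite mulr_sumr mulr_suml; apply: eq_bigr => T _; ring.
  rewrite exchange_big; apply: eq_bigr => S _.
  rewrite exchange_big; apply: eq_bigr => T _.
  by rewrite mulr_sumr.
rewrite big1 ?mulr0 // => S _; rewrite big1 // => T _.
have [FS0|] := eqVneq (fc F S) 0; first by rewrite FS0 !mul0r.
have [GT0|] := eqVneq (fc G T) 0; first by rewrite GT0 mulr0 mul0r.
move=> nG nF.
have hS : (#|S| <= D1)%N by rewrite leqNgt; apply: contra nF => /HF ->.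
have hT : (#|T| <= D2)%N by rewrite leqNgt; apply: contra nG => /HG ->.
under eq_bigr => A _ do rewrite chi_mul.
rewrite chi_ortho; case: eqP; last by rewrite mulr0.
move=> E; move: HU; rewrite -E => HU.
have := leq_trans (card_symd S T) (leq_add hS hT).
by rewrite leqNgt HU.
Qed.

Lemma hasdeg_prod (I : Type) (r : seq I) (P : pred I) (H : I -> {set 'I_n} -> R)
    (D : I -> nat) :
  (forall j, P j -> hasdeg (H j) (D j)) ->
  hasdeg (fun A => \prod_(j <- r | P j) H j A) (\sum_(j <- r | P j) D j).
Proof.
move=> HH; elim: r => [|x r IH].
  apply: (@hasdeg_ext (fun _ => 1)); first by move=> A; rewrite big_nil.
  by rewrite big_nil; apply: hasdeg_const.
rewrite big_cons; case: ifP => Px.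
  apply: (@hasdeg_ext (fun A => H x A * \prod_(j <- r | P j) H j A)).
    by move=> A; rewrite big_cons Px.
  exact: hasdeg_mul (HH x Px) IH.
apply: (@hasdeg_ext (fun A => \prod_(j <- r | P j) H j A)) => //.
by move=> A; rewrite big_cons Px.
Qed.

End Deg.

End CubeC.
Import CubeC.

Module CubeD.
Set Implicit Arguments. Unset Strict Implicit. Unset Printing Implicit Defensive.
Import Order.TTheory GRing.Theory Num.Theory.
Local Open Scope ring_scope.

Section Rel.
Variable R : realType.
Variable n : nat.
Implicit Types (S T U A B z : {set 'I_n}) (F G : {set 'I_n} -> R).
Local Notation chi := (@chi R n).
Local Notation fc := (@fc R n).
Local Notation hasdeg := (@hasdeg R n).

Definition Rel F := [set i | [exists A, F (A :\ i) != F (i |: A)]].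

Lemma chi_flip S i A :
  chi S (i |: A) = (if i \in S then -1 else 1) * chi S (A :\ i).
Proof.
rewrite /CubeA.chi (bigD1 i) //= [in RHS](bigD1 i) //= !inE eqxx /= andbT andbF mul1r.
congr (_ * _); apply: eq_bigr => j /negPf ji; rewrite !inE ji //.
Qed.

Definition Gi F (i : 'I_n) A := \sum_(S : {set 'I_n}) (if i \in S then fc F S else 0) * chi S A.

Lemma Gi_diff F i A : F (A :\ i) - F (i |: A) = 2 * Gi F i (A :\ i).
Proof.
rewrite (fc_inv F (A :\ i)) (fc_inv F (i |: A)) /Gi mulr_sumr -sumrB.
apply: eq_bigr => S _; rewrite chi_flip.
by case: (i \in S); ring.
Qed.

Lemma Gi_flip F i A : Gi F i (i |: A) = - Gi F i (A :\ i).
Proof.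
rewrite /Gi -sumrN; apply: eq_bigr => S _; rewrite chi_flip.
by case: (i \in S); ring.
Qed.

Lemma Gi_sq F i A : Gi F i A ^+ 2 = Gi F i (A :\ i) ^+ 2.
Proof.
have [iA|iA] := boolP (i \in A).
  have E : i |: A = A by apply/setP => j; rewrite !inE; case: eqP => // ->.
  by rewrite -{1}E Gi_flip sqrrN.
congr (_ ^+ 2); congr (Gi F i _); apply/setP => j; rewrite !inE.
by case: eqP => // ->; rewrite (negPf iA).
Qed.

Lemma fc_Gi F i S : fc (Gi F i) S = if i \in S then fc F S else 0.
Proof. by rewrite /Gi fc_lin. Qed.

Lemma hasdeg_Gi F i D : hasdeg F D -> hasdeg (Gi F i) D.
Proof. by move=> HF T HT; rewrite fc_Gi HF //; case: ifP. Qed.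

Lemma fc_zero F S : (forall A, F A = 0) -> fc F S = 0.
Proof. by move=> H; rewrite /CubeB.fc big1 ?mulr0 // => A _; rewrite H mul0r. Qed.

Lemma rel_of_fc F S i : fc F S != 0 -> i \in S -> i \in Rel F.
Proof.
move=> nz iS; apply: contraR nz => /negP nR.
have H0 : forall A, Gi F i (A :\ i) = 0.
  move=> A; have : F (A :\ i) - F (i |: A) = 0.
    apply/eqP; rewrite subr_eq0; case: (eqVneq (F (A :\ i)) (F (i |: A))) => // ne.
    by exfalso; apply: nR; rewrite inE; apply/existsP; exists A.
  by rewrite Gi_diff => /eqP; rewrite mulf_eq0 pnatr_eq0 /= => /eqP.
have H1 : forall A, Gi F i A = 0.
  by move=> A; apply/eqP; rewrite -sqrf_eq0 Gi_sq H0 expr0n.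
by have := fc_zero S H1; rewrite fc_Gi iS => ->.
Qed.

Lemma subset_prod U T :
  (U \subset T)%:R = \prod_i (if i \in U then (i \in T)%:R else 1 : R).
Proof.
case: (boolP (U \subset T)) => [/subsetP sUT|/subsetPn [i iU iT]].
  by rewrite big1 // => i _; case: ifP => // /sUT ->.
by rewrite (bigD1 i) //= iU (negPf iT) mul0r.
Qed.

Lemma fiber_sum T S z : z \subset ~: T ->
  \sum_(U : {set 'I_n} | U \subset T) chi S (z :|: U) * chi T U
    = (T \subset S)%:R * (2 ^ #|T|)%:R * chi S z.
Proof.
move=> /subsetP zT.
have zT' : forall i, i \in T -> i \notin z.
  by move=> i iT; apply/negP => /zT; rewrite inE iT.
transitivity (\sum_(U : {set 'I_n}) \prod_i (if i \in U then
   ((i \in T)%:R * (if i \in S then -1 else 1) * (if i \in T then -1 else 1))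
   else (if (i \in S) && (i \in z) then -1 else 1 : R))).
  rewrite big_mkcond; apply: eq_bigr => U _.
  transitivity ((U \subset T)%:R * (chi S (z :|: U) * chi T U)).
    by case: (U \subset T); rewrite ?mul0r ?mul1r.
  rewrite subset_prod /CubeA.chi -!big_split /=; apply: eq_bigr => i _.
  rewrite !inE; case: (i \in U); rewrite ?orbT ?orbF ?andbT ?andbF.
    by rewrite mulrA.
  by rewrite mul1r mulr1.
rewrite (cube_sum (fun i => (i \in T)%:R * (if i \in S then -1 else 1) * (if i \in T then -1 else 1))
   (fun i => if (i \in S) && (i \in z) then -1 else 1)).
case: (boolP (T \subset S)) => [/subsetP sTS|/subsetPn [i iT iS]]; last first.
  by rewrite (bigD1 i) //= iT (negPf iS) /= !mul1r addNr !mul0r.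
rewrite /= mul1r /CubeA.chi.
have -> : (2 ^ #|T|)%:R = \prod_i (if i \in T then 2 else 1 : R).
  by rewrite -big_mkcond /= prodr_const natrX.
rewrite -big_split /=; apply: eq_bigr => i _.
case: (boolP (i \in T)) => iT.
  by rewrite (sTS _ iT) (negPf (zT' _ iT)) /=; ring.
by rewrite /=; ring.
Qed.

Lemma SZ G D : hasdeg G D -> (exists S, fc G S != 0) ->
  (2 ^ n <= #|[set A | G A != 0%R]| * 2 ^ D)%N.
Proof.
move=> HG [S0 HS0].
case: (@arg_maxnP _ S0 (fun S => fc G S != 0) (fun S => #|S|) HS0) => T HT Tmax.
have TD : (#|T| <= D)%N by rewrite leqNgt; apply: contra HT => /HG ->.
have key : forall z, z \subset ~: T -> exists U, (U \subset T) && (G (z :|: U) != 0).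
  move=> z zT; apply/existsP; apply: contraLR HT; rewrite negb_exists => /forallP H.
  have E : \sum_(U : {set 'I_n} | U \subset T) G (z :|: U) * chi T U = 0.
    apply: big1 => U sUT; have := H U; rewrite sUT /= negbK => /eqP ->.
    by rewrite mul0r.
  move: E.
  have -> : \sum_(U : {set 'I_n} | U \subset T) G (z :|: U) * chi T U
      = \sum_S fc G S * ((T \subset S)%:R * (2 ^ #|T|)%:R * chi S z).
    transitivity (\sum_(U : {set 'I_n} | U \subset T) \sum_S fc G S * (chi S (z :|: U) * chi T U)).
      apply: eq_bigr => U _; rewrite (fc_inv G) mulr_suml; apply: eq_bigr => S _.
      by rewrite mulrA.
    rewrite exchange_big; apply: eq_bigr => S _.
    by rewrite -mulr_sumr fiber_sum.
  rewrite (bigD1 T) //= big1 ?addr0; last first.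
    move=> S nST; case: (boolP (T \subset S)) => sTS; last by rewrite /= !mul0r mulr0.
    have : (#|T| < #|S|)%N by apply: proper_card; rewrite properEneq eq_sym nST.
    have [->|nz] := eqVneq (fc G S) 0; first by rewrite mul0r.
    by move=> lt; have := Tmax S nz; rewrite /= leqNgt lt.
  rewrite subxx mul1r.
  have -> : chi T z = 1.
    apply: big1 => i _; case: (boolP (i \in T)) => //= iT.
    by move/subsetP: zT => zT; case: (boolP (i \in z)) => // /zT; rewrite inE iT.
  rewrite mulr1 => /eqP; rewrite mulf_eq0 pnatr_eq0 expn_eq0 /= orbF.
  by move=> ->.
pose Uz z := odflt set0 [pick U : {set 'I_n} | (U \subset T) && (G (z :|: U) != 0)].
have HU : forall z, z \subset ~: T -> (Uz z \subset T) && (G (z :|: Uz z) != 0).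
  move=> z /key [U HU]; rewrite /Uz; case: pickP => [U' -> //|/(_ U)].
  by rewrite HU.
pose phi z := z :|: Uz z.
have phiK : forall z, z \subset ~: T -> phi z :\: T = z.
  move=> z zT; have /andP [sUT _] := HU z zT.
  apply/setP => i; rewrite !inE.
  case: (boolP (i \in z)) => iz.
    by move/subsetP: zT => /(_ i iz); rewrite inE => ->.
  case: (boolP (i \in Uz z)) => iU; last by rewrite /= andbF.
  by rewrite (subsetP sUT _ iU).
have inj : {in powerset (~: T) &, injective phi}.
  by move=> z1 z2; rewrite !powersetE => /phiK h1 /phiK h2 E; rewrite -h1 -h2 E.
have le1 : (#|powerset (~: T)| <= #|[set A | G A != 0%R]|)%N.
  rewrite -(card_in_imset inj); apply: subset_leq_card; apply/subsetP => A.
  case/imsetP => z; rewrite powersetE => zT ->.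
  rewrite inE; by case/andP: (HU z zT).
rewrite card_powerset in le1.
have : (2 ^ n = 2 ^ #|~: T| * 2 ^ #|T|)%N.
  by rewrite -expnD addnC cardsC card_ord.
move=> ->; apply: leq_mul => //; exact: leq_pexp2l.
Qed.

End Rel.

End CubeD.
Import CubeD.

Module CubeE.
Set Implicit Arguments. Unset Strict Implicit. Unset Printing Implicit Defensive.
Import Order.TTheory GRing.Theory Num.Theory.
Local Open Scope ring_scope.

Section Bool.
Variable R : realType.
Variable n : nat.
Implicit Types (S T U A B z : {set 'I_n}) (F G : {set 'I_n} -> R).
Local Notation chi := (@chi R n).
Local Notation fc := (@fc R n).
Local Notation hasdeg := (@hasdeg R n).
Local Notation N2 := (@N2 R n).

Lemma sum_one : \sum_(A : {set 'I_n}) (1 : R) = N2.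
Proof.
have := @chi_ortho R n set0 set0; rewrite eqxx /CubeB.N2 => <-; apply: eq_bigr => A _.
by rewrite chi0 mulr1.
Qed.

Lemma sum_ind (P : {set {set 'I_n}}) :
  \sum_(A : {set 'I_n}) (A \in P)%:R = (#|P|)%:R :> R.
Proof.
rewrite (bigID (fun A => A \in P)) /= [X in _ + X]big1 ?addr0; last by move=> A /negPf ->.
rewrite (eq_bigr (fun _ => 1)); last by move=> A ->.
by rewrite sumr_const.
Qed.

Lemma bool_rel g D : (forall A, g A = 0 \/ g A = 1) -> hasdeg g D ->
  (#|Rel g| <= 4 * D * 2 ^ D)%N.
Proof.
move=> g01 Hg.
pose c := fc g.
pose Si (i : 'I_n) := \sum_(S : {set 'I_n}) (if i \in S then c S ^+ 2 else 0).
have Si_ge0 : forall i, 0 <= Si i.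
  by move=> i; apply: sumr_ge0 => S _; case: ifP => // _; apply: sqr_ge0.
have key : forall i, i \in Rel g -> 1 <= 4 * (2 ^ D)%:R * Si i.
  move=> i iR.
  have nz : exists S, fc (Gi g i) S != 0.
    move: iR; rewrite inE => /existsP [A neq].
    apply/existsP; apply: contraR neq; rewrite negb_exists => /forallP H.
    apply/eqP; apply/eqP; rewrite -subr_eq0 Gi_diff (fc_inv (Gi g i)) big1 ?mulr0 //.
    by move=> S _; have := H S; rewrite negbK => /eqP ->; rewrite mul0r.
  have hSZ := SZ (hasdeg_Gi i Hg) nz.
  have sq : forall A, 4 * Gi g i A ^+ 2 = (Gi g i A != 0)%:R.
    move=> A; rewrite Gi_sq.
    have E : 4 * Gi g i (A :\ i) ^+ 2 = (g (A :\ i) - g (i |: A)) ^+ 2.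
      by rewrite Gi_diff; ring.
    have [Z|NZ] := eqVneq (Gi g i (A :\ i)) 0.
      have : Gi g i A ^+ 2 = 0 by rewrite Gi_sq Z expr0n.
      by move/eqP; rewrite sqrf_eq0 => ->; rewrite Z expr0n mulr0.
    have -> : Gi g i A != 0.
      by rewrite -sqrf_eq0 Gi_sq sqrf_eq0.
    have ne : g (A :\ i) != g (i |: A).
      apply: contra NZ => /eqP eq; have := Gi_diff g i A; rewrite eq subrr.
      by move/esym/eqP; rewrite mulf_eq0 pnatr_eq0.
    rewrite /= E.
    by case: (g01 (A :\ i)) ne => ->; case: (g01 (i |: A)) => ->; rewrite ?eqxx // => _; ring.
  have E1 : 4 * \sum_A Gi g i A ^+ 2 = (#|[set A | Gi g i A != 0%R]|)%:R.
    rewrite mulr_sumr (eq_bigr _ (fun A _ => sq A)) -sum_ind.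
    by apply: eq_bigr => A _; rewrite inE.
  rewrite parseval in E1.
  have E2 : \sum_S fc (Gi g i) S ^+ 2 = Si i.
    by apply: eq_bigr => S _; rewrite fc_Gi; case: ifP; rewrite ?expr0n.
  rewrite E2 in E1.
  have : N2 <= (#|[set A | Gi g i A != 0%R]|)%:R * (2 ^ D)%:R.
    by rewrite /CubeB.N2 -natrM ler_nat.
  rewrite -E1 => H.
  have := N2_gt0 R n => Np.
  rewrite -(ler_pM2l Np) mulr1; apply: le_trans H _; rewrite le_eqVlt; apply/orP; left.
  by apply/eqP; ring.
have sumc : \sum_S c S ^+ 2 <= 1.
  have := parseval g; rewrite -/c => P.
  have : \sum_A g A ^+ 2 <= N2.
    rewrite -sum_one; apply: ler_sum => A _.
    by case: (g01 A) => ->; rewrite ?expr0n ?expr1n.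
  rewrite P -{2}(mulr1 N2) ler_pM2l //; exact: N2_gt0.
have sumS : \sum_i Si i <= D%:R.
  rewrite /Si exchange_big /=.
  apply: (@le_trans _ _ (\sum_S D%:R * c S ^+ 2)).
    apply: ler_sum => S _.
    rewrite -big_mkcond /= sumr_const -[_ *+ #|S|]mulr_natl.
    have [->|nz] := eqVneq (c S) 0; first by rewrite expr0n /= !mulr0.
    apply: ler_wpM2r; first exact: sqr_ge0.
    rewrite ler_nat leqNgt; apply/negP => /Hg /eqP; exact/negP.
  rewrite -mulr_sumr -[X in _ <= X]mulr1; apply: ler_wpM2l => //.
have : (#|Rel g|)%:R <= (4 * D * 2 ^ D)%:R :> R.
  rewrite -sum1_card natr_sum.
  apply: le_trans (_ : \sum_(i in Rel g) 4 * (2 ^ D)%:R * Si i <= _).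
    by apply: ler_sum => i /key.
  rewrite -mulr_sumr natrM mulrC.
  apply: le_trans (_ : 4 * (2 ^ D)%:R * D%:R <= _); last by rewrite mulrAC natrM.
  rewrite mulrC; apply: ler_wpM2l; first by apply: mulr_ge0.
  apply: le_trans sumS; rewrite [X in _ <= X](bigID (fun i => i \in Rel g)) /= lerDl.
  by apply: sumr_ge0.
by rewrite ler_nat.
Qed.

End Bool.

End CubeE.
Import CubeE.

Module CubeF.
Set Implicit Arguments. Unset Strict Implicit. Unset Printing Implicit Defensive.
Import Order.TTheory GRing.Theory Num.Theory.
Local Open Scope ring_scope.

Lemma card_bigcup_seq (T : finType) (I : Type) (r : seq I) (X : I -> {set T}) K :
  (forall y, (#|X y| <= K)%N) -> (#|\bigcup_(y <- r) X y| <= size r * K)%N.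
Proof.
move=> HX; elim: r => [|y r IH]; first by rewrite big_nil cards0.
rewrite big_cons /= mulSn; apply: leq_trans (leq_card_setU _ _) _.
exact: leq_add.
Qed.

Lemma bigcup_seq_sup (T : finType) (I : eqType) (r : seq I) (X : I -> {set T}) y :
  y \in r -> X y \subset \bigcup_(z <- r) X z.
Proof.
elim: r => [//|z r IH]; rewrite in_cons big_cons => /orP [/eqP ->|/IH h].
  exact: subsetUl.
exact: subset_trans h (subsetUr _ _).
Qed.

Section Multi.
Variable R : realType.
Variable n : nat.
Implicit Types (S T U A B z : {set 'I_n}) (F G : {set 'I_n} -> R).
Local Notation chi := (@chi R n).
Local Notation fc := (@fc R n).
Local Notation hasdeg := (@hasdeg R n).

Lemma multi_rel F d (V : seq R) : uniq V -> (forall A, F A \in V) -> hasdeg F d ->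
  (#|Rel F| <= size V * (4 * (d * size V) * 2 ^ (d * size V)))%N.
Proof.
move=> uV FV HF.
pose g (y : R) A := \prod_(y' <- V | y' != y) ((F A - y') / (y - y')).
have gval : forall y A, g y A = (F A == y)%:R.
  move=> y A; rewrite /g; case: eqP => [->|ne].
    by rewrite big1_seq // => y' /andP [ne _]; rewrite divff // subr_eq0 eq_sym.
  rewrite big_mkcond (bigD1_seq (F A)) //=.
  have -> : (F A != y) by apply/eqP.
  by rewrite subrr mul0r mul0r.
have gdeg : forall y, hasdeg (g y) (d * size V).
  move=> y; apply: hasdeg_mono (_ : (\sum_(y' <- V | y' != y) d <= _)%N) _.
    apply: leq_trans (_ : (\sum_(y' <- V) d <= _)%N).
      by rewrite big_mkcond /=; apply: leq_sum => y' _; case: ifP.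
    by rewrite big_const_seq count_predT iter_addn_0 mulnC.
  apply: hasdeg_prod => y' _.
  apply: (@hasdeg_ext _ _ (fun A => (y - y')^-1 * F A + (- y' / (y - y'))) ).
    by move=> A; rewrite mulrC mulrBl mulNr.
  exact: hasdeg_affine.
have sub : Rel F \subset \bigcup_(y <- V) Rel (g y).
  apply/subsetP => i; rewrite inE => /existsP [A neq].
  apply: (subsetP (bigcup_seq_sup (fun y => Rel (g y)) (FV (A :\ i)))).
  rewrite inE; apply/existsP; exists A.
  by rewrite !gval eqxx [F (i |: A) == _]eq_sym (negPf neq) /= oner_eq0.
apply: leq_trans (subset_leq_card sub) _.
apply: card_bigcup_seq => y; apply: bool_rel (gdeg y).
by move=> A; rewrite gval; case: eqP; [right|left].
Qed.

End Multi.

End CubeF.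
Import CubeF.

Module CubeG.
Set Implicit Arguments. Unset Strict Implicit. Unset Printing Implicit Defensive.
Import Order.TTheory GRing.Theory Num.Theory.
Local Open Scope ring_scope.

Section Link.
Variable R : realType.
Variable n : nat.
Variables a b : R.
Hypothesis ab : a != b.
Implicit Types (S T U A B z : {set 'I_n}) (F G : {set 'I_n} -> R).
Local Notation chi := (@chi R n).
Local Notation fc := (@fc R n).
Local Notation hasdeg := (@hasdeg R n).

Definition xA A (j : 'I_n) := if j \in A then b else a.

Lemma Phi_eq S T :
  \sum_A (\prod_(j in S) xA A j) * chi T A =
  \prod_i ((if i \in S then b else 1) * (if i \in T then -1 else 1)
           + (if i \in S then a else 1)).
Proof.
rewrite -(cube_sum (fun i => (if i \in S then b else 1) * (if i \in T then -1 else 1))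
                   (fun i => if i \in S then a else 1)).
apply: eq_bigr => A _; rewrite big_mkcond /CubeA.chi -big_split /=.
apply: eq_bigr => i _; rewrite /xA.
by case: (i \in A); case: (i \in S); case: (i \in T); rewrite /= ?mulr1 ?mul1r.
Qed.

Lemma Phi_zero S T : ~~ (T \subset S) ->
  \sum_A (\prod_(j in S) xA A j) * chi T A = 0.
Proof.
case/subsetPn => i iT iS; rewrite Phi_eq (bigD1 i) //= iT (negPf iS).
by rewrite mul1r addNr mul0r.
Qed.

Lemma Phi_diag T : \sum_A (\prod_(j in T) xA A j) * chi T A != 0.
Proof.
rewrite Phi_eq; apply/prodf_neq0 => i _.
case: (i \in T) => /=.
  by rewrite mulrN1 addrC subr_eq0.
by rewrite mulr1; apply/eqP; lra.
Qed.

Variable q : mlpoly R n.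
Definition Fq A := ml_eval q (xA A).

Lemma fc_Fq T : fc Fq T = (N2 R n)^-1 *
   \sum_S q S * \sum_A (\prod_(j in S) xA A j) * chi T A.
Proof.
rewrite /CubeB.fc /Fq /ml_eval; congr (_ * _).
under eq_bigr => A _ do rewrite mulr_suml.
rewrite exchange_big; apply: eq_bigr => S _.
by rewrite mulr_sumr; apply: eq_bigr => A _; rewrite mulrA.
Qed.

Lemma hasdeg_Fq d : ml_deg_le q d -> hasdeg Fq d.
Proof.
move=> Hq T HT; rewrite fc_Fq big1 ?mulr0 // => S _.
have [->|nz] := eqVneq (q S) 0; first by rewrite mul0r.
rewrite Phi_zero ?mulr0 //; apply/negP => /subset_leq_card sTS.
have := Hq S nz => le; have := leq_trans sTS le; by rewrite leqNgt HT.
Qed.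

Lemma coef_rel S0 i : q S0 != 0 -> i \in S0 -> i \in Rel Fq.
Proof.
move=> nz iS0.
case: (@arg_maxnP _ S0 (fun S => (i \in S) && (q S != 0)) (fun S => #|S|)) => /=.
  by rewrite iS0 nz.
move=> T /andP [iT qT] Tmax.
apply: (@rel_of_fc _ _ _ T) => //.
rewrite fc_Fq mulf_eq0 negb_or invr_eq0 N2_neq0 /=.
rewrite (bigD1 T) //= [X in _ + X]big1 ?addr0.
  by apply: mulf_neq0 => //; exact: Phi_diag.
move=> S nST.
case: (boolP (T \subset S)) => sTS; last by rewrite Phi_zero ?mulr0.
have lt : (#|T| < #|S|)%N by apply: proper_card; rewrite properEneq eq_sym nST.
have [->|qS] := eqVneq (q S) 0; first by rewrite mul0r.
have := Tmax S; rewrite (subsetP sTS _ iT) qS /= => /(_ isT).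
by rewrite leqNgt lt.
Qed.

End Link.

End CubeG.
Import CubeG.

Module CubeH.
Local Open Scope nat_scope.
Set Implicit Arguments. Unset Strict Implicit. Unset Printing Implicit Defensive.
Import Order.TTheory GRing.Theory Num.Theory.

Lemma sq_le_pow M : M * M <= 2 ^ M.+1.
Proof.
elim: M => [//|M IH].
case: (leqP M 2) => HM.
  by case: M HM IH => [|[|[|]]].
rewrite expnS.
move: IH; set X := 2 ^ M.+1 => IH.
nia.
Qed.

Lemma numeric L M d : 1 <= d -> L <= M ->
  (L * (4 * (d * L) * 2 ^ (d * L)) + 1) ^ d <= 2 ^ (2 * d ^ 2 * (M + 3)).
Proof.
move=> d1 LM.
have r1 : L * (4 * (d * L) * 2 ^ (d * L)) <= M * (4 * (d * M) * 2 ^ (d * M)).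
  apply: leq_mul => //; apply: leq_mul; first by apply: leq_mul => //; apply: leq_mul.
  by apply: leq_pexp2l => //; apply: leq_mul.
have r2 : M * (4 * (d * M) * 2 ^ (d * M)) <= 2 ^ (3 + d + M + d * M).
  have h1 := sq_le_pow M.
  have h2 : d <= 2 ^ d by apply: ltnW; apply: ltn_expl.
  rewrite !expnD.
  have -> : M * (4 * (d * M) * 2 ^ (d * M)) = 4 * d * (M * M) * 2 ^ (d * M) by ring.
  apply: leq_mul => //.
  have -> : 2 ^ 3 * 2 ^ d * 2 ^ M = 4 * 2 ^ d * 2 ^ M.+1 by rewrite (expnS 2 M); ring.
  apply: leq_mul => //; apply: leq_mul => //.
set E := 3 + d + M + d * M.
have r3 : L * (4 * (d * L) * 2 ^ (d * L)) + 1 <= 2 ^ (2 * d * M + 6 * d).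
  apply: leq_trans (_ : 2 ^ E.+1 <= _).
    rewrite expnS mul2n -addnn; apply: leq_add; first exact: leq_trans r1 r2.
    by rewrite expn_gt0.
  by apply: leq_pexp2l => //; rewrite /E; nia.
apply: leq_trans (_ : (2 ^ (2 * d * M + 6 * d)) ^ d <= _).
  by rewrite leq_exp2r ?r3 //; lia.
by rewrite -expnM; apply: leq_pexp2l => //; nia.
Qed.

Lemma card_small (T : finType) (Rl : {set T}) d :
  #|[set S : {set T} | (S \subset Rl) && (#|S| <= d)]| <= (#|Rl| + 1) ^ d.
Proof.
elim: d => [|d IH].
  rewrite expn0; apply: leq_trans (_ : #|[set (set0 : {set T})]| <= 1); last by rewrite cards1.
  apply: subset_leq_card; apply/subsetP => S; rewrite !inE leqn0 cards_eq0.
  by case/andP.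
set Nd := [set S : {set T} | (S \subset Rl) && (#|S| <= d)].
have sub : [set S : {set T} | (S \subset Rl) && (#|S| <= d.+1)] \subset
    set0 |: ((fun p : T * {set T} => p.1 |: p.2) @: setX Rl Nd).
  apply/subsetP => S; rewrite !inE => /andP [sSR cS].
  have [->|[x xS]] := set_0Vmem S; first by rewrite eqxx.
  apply/orP; right; apply/imsetP; exists (x, S :\ x).
    rewrite !inE (subsetP sSR _ xS) /=; apply/andP; split.
      by apply: subset_trans (subsetDl _ _) sSR.
    by rewrite (cardsD1 x S) xS in cS.
  by rewrite /= setD1K.
apply: leq_trans (subset_leq_card sub) _.
apply: leq_trans (leq_card_setU _ _) _; rewrite cards1.
apply: leq_trans (_ : 1 + #|Rl| * (#|Rl| + 1) ^ d <= _).
  by rewrite leq_add2l; apply: leq_trans (leq_imset_card _ _) _; rewrite cardsX leq_mul2l IH orbT.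
rewrite expnS mulnDl mul1n addnC leq_add2l expn_gt0 //; lia.
Qed.

End CubeH.
Import CubeH.

Module CubeI.
Set Implicit Arguments. Unset Strict Implicit. Unset Printing Implicit Defensive.
Import Order.TTheory GRing.Theory Num.Theory.
Local Open Scope ring_scope.

Lemma ml_eval_ext (R : realType) n (p : mlpoly R n) (x y : 'I_n -> R) :
  (forall i, x i = y i) -> ml_eval p x = ml_eval p y.
Proof.
move=> H; apply: eq_bigr => S _; congr (_ * _); apply: eq_bigr => i _; exact: H.
Qed.

Lemma law_pos (R : realType) k n (v w : 'I_k -> R) (p : mlpoly R n)
    (x : {ffun 'I_n -> 'I_k}) :
  (forall i, 0 < w i) -> law_at v w p (ml_eval p (fun i => v (x i))) != 0.
Proof.
move=> hw; apply: lt0r_neq0; rewrite /law_at (bigD1 x) //=.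
have h1 : 0 < \prod_(i < n) w (x i) by apply: prodr_gt0.
apply: lt_le_trans h1 _; rewrite lerDl.
by apply: sumr_ge0 => a _; apply: prodr_ge0 => i _; apply: ltW.
Qed.

Lemma law_ex (R : realType) k n (v w : 'I_k -> R) (p : mlpoly R n) t :
  law_at v w p t != 0 -> exists x : {ffun 'I_n -> 'I_k}, ml_eval p (fun i => v (x i)) = t.
Proof.
rewrite /law_at; case: (pickP (fun x : {ffun 'I_n -> 'I_k} => ml_eval p (fun i => v (x i)) == t)).
  by move=> x /eqP E _; exists x.
by move=> none; rewrite big_pred0 ?eqxx.
Qed.

Lemma card_bigcup_mem (T : finType) (r : seq {set T}) K :
  (forall y, y \in r -> (#|y| <= K)%N) -> (#|\bigcup_(y <- r) y| <= size r * K)%N.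
Proof.
elim: r => [|y r IH] H; first by rewrite big_nil cards0.
rewrite big_cons /= mulSn; apply: leq_trans (leq_card_setU _ _) _.
apply: leq_add; first by apply: H; rewrite mem_head.
by apply: IH => z zr; apply: H; rewrite in_cons zr orbT.
Qed.

Lemma main_bound (R : realType) k (v w : 'I_k -> R) l d s n (p q : mlpoly R n) :
  finite_rv v w -> rv_mean v w = 0 -> rv_var v w = 1 -> (k <= l)%N -> (1 <= d)%N ->
  ml_deg_le p d -> ml_deg_le q d -> sparsity p = s -> ident_distr v w p q ->
  (sparsity q <= Phi d s l)%N.
Proof.
case: k v w => [|[|k]] v w [vinj [wpos wsum]] mean var kl d1 Hp Hq sp hid.
- by move: wsum; rewrite big_ord0 => /eqP; rewrite eq_sym oner_eq0.
- move: var; rewrite /rv_var mean big_ord1 subr0.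
  move: mean wsum; rewrite /rv_mean !big_ord1 => /eqP; rewrite mulf_eq0 => /orP [/eqP w0|/eqP ->].
    by have := wpos ord0; rewrite w0 ltxx.
  by rewrite expr0n mulr0 => _ /eqP; rewrite eq_sym oner_eq0.
pose o0 : 'I_k.+2 := ord0.
pose o1 : 'I_k.+2 := ord_max.
pose a := v o0; pose b := v o1.
have ab : a != b by apply/eqP => /vinj.
pose F := Fq a b q.
have Fdeg : hasdeg F d := hasdeg_Fq a b Hq.
pose V := undup [seq F A | A <- enum [set: {set 'I_n}]].
have FV : forall A, F A \in V.
  by move=> A; rewrite mem_undup; apply: map_f; rewrite mem_enum inE.
pose J := \bigcup_(S <- enum [set S | p S != 0]) S.
have SJ : forall S, p S != 0 -> S \subset J.
  move=> S pS; apply: (@bigcup_seq_sup _ _ _ (fun S : {set 'I_n} => S)); by rewrite mem_enum inE.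
have cJ : (#|J| <= d * s)%N.
  rewrite mulnC -sp /sparsity [X in (_ <= X * _)%N]cardE; apply: card_bigcup_mem => S.
  by rewrite mem_enum inE => /Hp.
pose P := pffun_on o0 J [set: 'I_k.+2].
pose pv (x : {ffun 'I_n -> 'I_k.+2}) := ml_eval p (fun i => v (x i)).
have Vsub : {subset V <= [seq pv x | x <- enum P]}.
  move=> y; rewrite mem_undup => /mapP [A _ ->].
  pose xa : {ffun 'I_n -> 'I_k.+2} := [ffun i => if i \in A then o1 else o0].
  have E : F A = ml_eval q (fun i => v (xa i)).
    apply: ml_eval_ext => i; rewrite /xA ffunE; by case: (i \in A).
  have := law_pos v q xa wpos; rewrite -E -hid => /law_ex [x Ex].
  pose x' : {ffun 'I_n -> 'I_k.+2} := [ffun i => if i \in J then x i else o0].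
  have Ex' : pv x' = F A.
    rewrite -Ex; apply: eq_bigr => S _.
    have [->|pS] := eqVneq (p S) 0; first by rewrite !mul0r.
    congr (_ * _); apply: eq_bigr => i iS.
    by rewrite ffunE (subsetP (SJ S pS) _ iS).
  rewrite -Ex'; apply: map_f; rewrite mem_enum.
  apply/pffun_onP; split.
    apply/subsetP => i; rewrite inE ffunE; by case: (i \in J) => //; rewrite eqxx.
  by move=> z _; rewrite inE.
have sV : (size V <= l ^ (d * s))%N.
  apply: leq_trans (uniq_leq_size (undup_uniq _) Vsub) _.
  rewrite size_map -cardE card_pffun_on cardsT card_ord.
  apply: leq_trans (_ : (l ^ #|J| <= _)%N).
    case: (posnP #|J|) => [->|Jp]; first by rewrite !expn0.
    by rewrite leq_exp2r.
  apply: leq_pexp2l => //; lia.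
have rel := multi_rel (undup_uniq _) FV Fdeg.
have spq : (sparsity q <= #|[set S : {set 'I_n} | (S \subset Rel F) && (#|S| <= d)]|)%N.
  apply: subset_leq_card; apply/subsetP => S; rewrite !inE => qS.
  rewrite Hq // andbT; apply/subsetP => i iS.
  exact: (@coef_rel R n a b ab q S i qS iS).
apply: leq_trans spq _; apply: leq_trans (card_small _ _) _.
apply: leq_trans (numeric d1 sV).
by rewrite leq_exp2r // leq_add2r.
Qed.

End CubeI.
Import CubeI.


Lemma max_exists (P : nat -> Prop) B : (exists x, P x) ->
  (forall t, P t -> (t <= B)%N) -> exists m, P m /\ forall t, P t -> (t <= m)%N.
Proof.
elim: B => [|B IH] ex hb.
  case: ex => x Px; exists x; split => // t Pt.
  by have := hb t Pt; have := hb x Px; lia.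
case: (classic (P B.+1)) => [PB|nPB]; first by exists B.+1.
apply: IH => // t Pt; have := hb t Pt; rewrite leq_eqVlt => /orP [/eqP E|//].
by rewrite E in Pt.
Qed.

Theorem theorem1p5 (R : realType) (k : nat) (v w : 'I_k -> R) (l d s : nat) :
  finite_rv v w -> rv_mean v w = 0 -> rv_var v w = 1 -> (k <= l)%N ->
  (1 <= d)%N -> (1 <= s)%N ->
  (* no pair with sparsity(q) > Phi *)
  (forall t : nat, (Phi d s l < t)%N -> ~ gap_achievable v w d s t) /\
  (* Max-Sparsity-Gap is well defined (a largest admissible t exists) and <= Phi *)
  (exists m : nat, [/\ gap_achievable v w d s m,
                      (forall t : nat, gap_achievable v w d s t -> (t <= m)%N)
                    & (m <= Phi d s l)%N]).
Proof.
move=> fr mean var kl d1 s1.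
have bound : forall t, gap_achievable v w d s t -> (t <= Phi d s l)%N.
  move=> t [n0 [p [q [Hp Hq sp sq hid]]]]; rewrite -sq.
  exact: (main_bound fr mean var kl d1 Hp Hq sp hid).
split.
  by move=> t lt ach; have := bound t ach; rewrite leqNgt lt.
have ach_s : gap_achievable v w d s s.
  exists s; pose p : mlpoly R s := [ffun S : {set 'I_s} => if #|S| == 1%N then 1 else 0].
  exists p, p; split => //.
  - by move=> S; rewrite /p ffunE; case: (#|S| =P 1%N) => [->|_]; rewrite ?eqxx.
  - by move=> S; rewrite /p ffunE; case: (#|S| =P 1%N) => [->|_]; rewrite ?eqxx.
  - rewrite /sparsity -[in RHS](card_ord s) -[#|'I_s|]bin1 -card_draws.
    apply: eq_card => S; rewrite !inE /p ffunE; case: (#|S| =P 1%N) => _ /=.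
      by rewrite oner_eq0.
    by rewrite eqxx.
  - rewrite /sparsity -[in RHS](card_ord s) -[#|'I_s|]bin1 -card_draws.
    apply: eq_card => S; rewrite !inE /p ffunE; case: (#|S| =P 1%N) => _ /=.
      by rewrite oner_eq0.
    by rewrite eqxx.
have [m [Pm mmax]] := @max_exists (gap_achievable v w d s) (Phi d s l) (ex_intro _ s ach_s) bound.
by exists m; split => //; apply: bound.
Qed.
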